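(* Let $F$ be a forest on $n$ vertices (of arbitrary maximum degree) and let $\mathcal{U}$ be any UFO tree for $F$. Then $\mathcal{U}$ has height $O(\log n)$, contains $O(n)$ nodes (clusters) in total, and uses $O(n)$ space.
   Context: UFO trees. Let $F$ be a forest with vertex set $V$, $|V|=n$. A cluster is a vertex set inducing a connected subgraph of $F$. Level-$0$ clusters are the singletons $\{v\}$. The level-$i$ clusters partition $V$; two level-$i$ clusters are adjacent if an edge of $F$ joins them, and the degree of a cluster is the number of edges of $F$ with exactly one endpoint in it; a cluster is high degree if its degree is at least $3$. Level $i+1$ is obtained from level $i$ by choosing pairwise disjoint groups of level-$i$ clusters, each being an allowed merge: two adjacent clusters of degrees $\{1,1\}$, $\{1,2\}$ or $\{2,2\}$, or a high-degree cluster together with one or more adjacent degree-$1$ clusters. The choice must be maximal in the following sense: every high-degree cluster is grouped together with all of its adjacent degree-$1$ clusters, and among the remaining clusters of degree $1$ and $2$ the pairs form a maximal matching of allowed pairs (no two adjacent ungrouped clusters form an allowed pair). Each group is replaced by its union; each ungrouped cluster becomes a level-$(i+1)$ cluster by itself. This is repeated until every component of $F$ is one cluster. The UFO tree is the rooted forest of all clusters of all levels, the parent of a level-$i$ cluster being the level-$(i+1)$ cluster containing it; its height is the number of levels above level $0$. The space counts, for each cluster, its parent and children pointers and its adjacency list at its level. *)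

(* Defs.v *)
From mathcomp Require Import all_boot.
Set Implicit Arguments. Unset Strict Implicit. Unset Printing Implicit Defensive.

Section UFO.
Variables (T : finType) (e : rel T).

Definition forest : Prop :=
  [/\ symmetric e, irreflexive e &
      forall c : seq T, 2 < size c -> ~ ucycle e c].

(* degree of a cluster: number of edges with exactly one endpoint in C
   (each such edge counted once, as the ordered pair (inside, outside)). *)
Definition cdeg (C : {set T}) : nat :=
  #|[set p : T * T | [&& e p.1 p.2, p.1 \in C & p.2 \notin C]]|.

Definition cadj (C D : {set T}) : bool :=
  (C != D) && [exists x in C, exists y in D, e x y].

Definition low_deg (C : {set T}) : bool := (0 < cdeg C) && (cdeg C <= 2).

Definition singletons : {set {set T}} := [set [set x] | x : T].

Definition components : {set {set T}} := [set [set y | connect e x y] | x : T].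

Definition allowed_merge (P g : {set {set T}}) : bool :=
  (g \subset P) &&
  ([exists C in g, exists D in g,
      [&& g == [set C; D], cadj C D, low_deg C & low_deg D]]
   || [exists H in g, [&& 2 < cdeg H, g :\ H != set0 &
        [forall D in g :\ H, (cdeg D == 1) && cadj H D]]]).

Definition grouped (G : {set {set {set T}}}) (C : {set T}) : bool :=
  [exists g in G, C \in g].

Definition ufo_step (P Q : {set {set T}}) : Prop :=
  exists G : {set {set {set T}}},
  [/\ forall g, g \in G -> allowed_merge P g,
      forall g1 g2, g1 \in G -> g2 \in G -> g1 != g2 -> [disjoint g1 & g2],
      forall H D, H \in P -> D \in P -> 2 < cdeg H -> cdeg D = 1 -> cadj H D ->
        exists2 g, g \in G & (H \in g) && (D \in g),
      (* maximality of the matching among remaining degree-1/2 clusters *)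
      forall C D, C \in P -> D \in P -> ~~ grouped G C -> ~~ grouped G D ->
        cadj C D -> ~~ (low_deg C && low_deg D)
    & Q = [set cover g | g in G] :|: [set C in P | ~~ grouped G C]].

Definition is_ufo (L : nat -> {set {set T}}) (h : nat) : Prop :=
  [/\ L 0 = singletons,
      forall i, i < h -> ufo_step (L i) (L i.+1),
      L h = components &
      forall i, i < h -> L i != components].

(* nodes of the UFO tree: cluster C at level i, except copies of a cluster
   that was already a whole component (degree 0) at the previous level. *)
Definition is_node (L : nat -> {set {set T}}) (i : nat) (C : {set T}) : bool :=
  (C \in L i) && [|| i == 0, C \notin L i.-1 | 0 < cdeg C].

Definition ufo_nodes (L : nat -> {set {set T}}) (h : nat) : nat :=
  \sum_(i < h.+1) #|[set C | is_node L i C]|.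

(* space: per node, one parent pointer, its children pointers, and its
   adjacency list at its level *)
Definition ufo_space (L : nat -> {set {set T}}) (h : nat) : nat :=
  \sum_(i < h.+1) \sum_(C | is_node L i C)
     (1 + #|[set D | (0 < i) && is_node L i.-1 D && (D \subset C)]|
        + #|[set D in L i | cadj C D]|).

End UFO.

(* Main.v *)
Set Warnings "-notation-overridden".
Require Import Defs.
From mathcomp Require Import all_boot.
Set Warnings "-notation-overridden".
From mathcomp Require Import zify.
Set Implicit Arguments. Unset Strict Implicit. Unset Printing Implicit Defensive.

Lemma arith1 x y z a b : y + z + 2 <= x -> 2 * b <= z + 2 -> 2 * a <= y + 2 -> 2 * (a + b) <= x + 2.
Proof. lia. Qed.

Lemma arith2 sK sHI sL2 sLF sR k hi l2 lf r :
  sK + 2 <= 2 * k -> sK = sHI + sL2 -> sL2 = sLF + sR -> sLF = lf -> 2 * r <= sR ->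
  hi + l2 = k -> lf + r = l2 -> sHI + 2 <= 2 * hi + lf.
Proof. lia. Qed.

Lemma arith3 sh hi lf sgl gr nbgl nbhi u U123 Ugn U12 :
  sh + 2 <= 2 * hi + lf -> 3 * hi <= sh -> sgl <= 2 * gr -> nbgl <= sgl -> nbhi <= sh ->
  u <= U123 -> lf <= Ugn -> U123 <= U12 + nbhi -> U12 <= nbgl + hi -> Ugn <= gr + nbgl ->
  u <= 14 * gr.
Proof. lia. Qed.

Lemma arith4 kQ G u gr kP : kQ <= G + u -> 2 * G <= gr -> kP = gr + u -> u <= 14 * gr ->
  30 * kQ <= 29 * kP.
Proof. lia. Qed.

Lemma arith5 nw G gr kP u : nw <= G -> 2 * G <= gr -> kP = gr + u -> nw <= kP.
Proof. lia. Qed.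

Section Forest.
Variables (T : finType) (e : rel T).
Hypothesis hF : forest e.

Lemma esym : symmetric e. Proof. by case: hF. Qed.
Lemma eirr : irreflexive e. Proof. by case: hF. Qed.
Lemma enocyc c : 2 < size c -> ~ ucycle e c. Proof. by case: hF => _ _; apply. Qed.

Lemma no_back x u p1 w p2 :
  uniq (x :: u :: p1 ++ w :: p2) -> path e x (u :: p1 ++ w :: p2) -> e x w -> False.
Proof.
move=> Hu Hp Hxw.
have Eq : x :: u :: p1 ++ w :: p2 = (x :: u :: rcons p1 w) ++ p2.
  by rewrite /= -cats1 -catA.
apply: (@enocyc (x :: u :: rcons p1 w)); first by rewrite /= size_rcons.
rewrite /ucycle; apply/andP; split; last first.
  by move: Hu; rewrite Eq cat_uniq => /andP[].
rewrite /cycle rcons_path; apply/andP; split.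
  have : path e x ((u :: rcons p1 w) ++ p2) by rewrite -[_ ++ _]/(u :: (rcons p1 w ++ p2)) cat_rcons.
  by rewrite cat_path => /andP[].
by rewrite /= last_rcons esym.
Qed.

Lemma leaf_ext (U : {set T}) m x p :
  #|T| - size p <= m -> uniq (x :: p) -> all (mem U) (x :: p) -> path e x p ->
  exists2 v, v \in U & #|[set w in U | e v w]| <= 1.
Proof.
elim: m x p => [|m IH] x p Hm Hu Ha Hp.
  have := max_card (mem (x :: p)); rewrite (card_uniqP Hu) /=.
  by move=> H; move: Hm; rewrite leqn0 subn_eq0 leqNgt H.
case: (pickP [pred w | (w \in U) && e x w && (w \notin x :: p)]) => [w /= /andP[/andP[wU xw] wn]|Hn].
  apply: (IH w (x :: p)) => //=.
  - by move: Hm => /=; lia.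
  - by rewrite wn.
  - by rewrite wU.
  - by rewrite esym xw.
exists x; first by move: Ha => /= /andP[].
apply/card_le1_eqP => y z; rewrite !inE => /andP[yU xy] /andP[zU xz].
suff H : forall w, w \in U -> e x w -> w = head x p by rewrite (H y) // (H z).
move=> w wU xw.
have wp : w \in x :: p by move: (Hn w) => /=; rewrite wU xw /= => /negbFE.
clear Hn Hm Ha IH; case: p Hu Hp wp => [|u p'] Hu Hp.
  by rewrite inE => /eqP wx; move: xw; rewrite wx eirr.
rewrite !inE => /orP[/eqP wx|/orP[/eqP -> //|wp']].
  by move: xw; rewrite wx eirr.
case/splitPr: wp' Hu Hp => p1 p2 Hu Hp.
by case: (no_back Hu Hp xw).
Qed.

Lemma leaf_exists U : U != set0 -> exists2 v, v \in U & #|[set w in U | e v w]| <= 1.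
Proof.
case/set0Pn => x xU.
apply: (@leaf_ext U #|T| x [::]) => //=; first by rewrite subn0.
by rewrite xU.
Qed.


Lemma card_setU_le (A B : {set T * T}) : #|A :|: B| <= #|A| + #|B|.
Proof. by rewrite cardsU leq_subr. Qed.

Lemma card_setU_le2 (A B : {set {set T}}) : #|A :|: B| <= #|A| + #|B|.
Proof. by rewrite cardsU leq_subr. Qed.

Definition ie (A : {set T}) :=
  #|[set p : T * T | [&& e p.1 p.2, p.1 \in A & p.2 \in A]]|.

Lemma ie_forest_n n (U : {set T}) : #|U| = n.+1 -> ie U + 2 <= 2 * #|U|.
Proof.
elim: n U => [|n IH] U HU.
  have /cards1P [v ->] : #|U| == 1 by rewrite HU.
  rewrite /ie cards1.
  suff -> : [set p : T * T | [&& e p.1 p.2, p.1 \in [set v] & p.2 \in [set v]]] = set0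
    by rewrite cards0.
  apply/setP => [[a b]]; rewrite !inE /=.
  by apply/negbTE/and3P => -[ab /eqP av /eqP bv]; move: ab; rewrite av bv eirr.
have [v vU Hv] : exists2 v, v \in U & #|[set w in U | e v w]| <= 1.
  by apply: leaf_exists; rewrite -card_gt0 HU.
set N := [set w in U | e v w].
have HU' : #|U :\ v| = n.+1 by move: HU; rewrite (cardsD1 v) vU; case.
have IH' := IH _ HU'.
have Hsub : [set p : T * T | [&& e p.1 p.2, p.1 \in U & p.2 \in U]] \subset
   ([set p : T * T | [&& e p.1 p.2, p.1 \in U :\ v & p.2 \in U :\ v]] :|:
     [set (v, w) | w in N]) :|: [set (w, v) | w in N].
  apply/subsetP => [[a b]]; rewrite !inE /= => /and3P[ab aU bU].
  case: (a =P v) => [av|na].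
    apply/orP; left; apply/orP; right; apply/imsetP; exists b => //.
      by rewrite inE bU -av ab.
    by rewrite av.
  case: (b =P v) => [bv|nb].
    apply/orP; right; apply/imsetP; exists a => //.
      by rewrite inE aU esym -bv ab.
    by rewrite bv.
  by rewrite ab aU bU.
have := subset_leq_card Hsub.
have := card_setU_le ([set p : T * T | [&& e p.1 p.2, p.1 \in U :\ v & p.2 \in U :\ v]] :|:
     [set (v, w) | w in N]) [set (w, v) | w in N].
have := card_setU_le [set p : T * T | [&& e p.1 p.2, p.1 \in U :\ v & p.2 \in U :\ v]]
     [set (v, w) | w in N].
have := leq_imset_card (fun w => (v, w)) N.
have := leq_imset_card (fun w => (w, v)) N.
rewrite /ie HU in IH' *; rewrite HU' in IH'.
move: Hv; rewrite -/N.
set S0 := [set p : T * T | _ & (p.1 \in U) && (p.2 \in U)].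
set S1 := [set p : T * T | _ & (p.1 \in U :\ v) && _].
set A := [set (v, w) | w in N]. set B := [set (w, v) | w in N].
move: #|S0| #|S1| #|A| #|B| #|S1 :|: A| #|S1 :|: A :|: B| #|N| IH'; lia.
Qed.

Lemma ie_forest (U : {set T}) : U != set0 -> ie U + 2 <= 2 * #|U|.
Proof.
rewrite -card_gt0; case H: #|U| => [//|n] _.
by rewrite -H; apply: (ie_forest_n H).
Qed.


Lemma pair_card (A : {set T}) (f : T -> T -> bool) :
  #|[set p : T * T | (p.1 \in A) && f p.1 p.2]| = \sum_(x in A) #|[set y | f x y]|.
Proof.
symmetry; under eq_bigr => x _ do rewrite -(sum1dep_card (f x)).
by rewrite pair_big_dep /= sum1dep_card.
Qed.

Lemma ie_sum (A : {set T}) : ie A = \sum_(x in A) #|[set y | e x y && (y \in A)]|.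
Proof.
rewrite -(pair_card A (fun x y => e x y && (y \in A))) /ie; apply: eq_card => p; rewrite !inE.
by case: (e p.1 p.2); case: (p.1 \in A).
Qed.

Lemma cdeg_sum (A : {set T}) : cdeg e A = \sum_(x in A) #|[set y | e x y && (y \notin A)]|.
Proof.
rewrite -(pair_card A (fun x y => e x y && (y \notin A))) /cdeg; apply: eq_card => p; rewrite !inE.
by case: (e p.1 p.2); case: (p.1 \in A).
Qed.

Lemma nbr_split (A : {set T}) x :
  #|[set y | e x y]| = #|[set y | e x y && (y \in A)]| + #|[set y | e x y && (y \notin A)]|.
Proof.
rewrite -(cardsID A [set y | e x y]); congr (_ + _); apply: eq_card => y; rewrite !inE //.
by rewrite andbC.
Qed.

Lemma cdeg_gt0 (C : {set T}) x y : e x y -> x \in C -> y \notin C -> 0 < cdeg e C.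
Proof.
move=> xy xC yC; apply/card_gt0P; exists (x, y); by rewrite inE /= xy xC yC.
Qed.

Definition part (P : {set {set T}}) := partition P [set: T].

Lemma part_mem P x : part P -> pblock P x \in P.
Proof. by move=> /and3P[/eqP cP _ _]; apply: pblock_mem; rewrite cP inE. Qed.

Lemma part_in P x : part P -> x \in pblock P x.
Proof. by move=> /and3P[/eqP cP _ _]; rewrite mem_pblock cP inE. Qed.

Lemma part_def P C x : part P -> C \in P -> x \in C -> pblock P x = C.
Proof. by move=> /and3P[_ tP _]; apply: def_pblock. Qed.

Lemma part_uniq P C D x : part P -> C \in P -> D \in P -> x \in C -> x \in D -> C = D.
Proof. by move=> hP CP DP xC xD; rewrite -(part_def hP CP xC) (part_def hP DP xD). Qed.

Lemma part_ne0 P C : part P -> C \in P -> C != set0.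
Proof. by move=> /and3P[_ _ nP] CP; apply/eqP => C0; move: nP; rewrite -C0 CP. Qed.

Lemma part_triv P : part P -> trivIset P.
Proof. by case/and3P. Qed.

Definition Dinv (P : {set {set T}}) := forall C, C \in P -> 2 * #|C| <= ie C + 2.

Definition Kset (P : {set {set T}}) := [set C in P | 0 < cdeg e C].

Lemma nbr_in_K P C x y : part P -> C \in Kset P -> x \in C -> e x y -> y \in cover (Kset P).
Proof.
move=> hP CK xC xy; have CP : C \in P by move: CK; rewrite inE => /andP[].
case yC: (y \in C); first by apply/bigcupP; exists C.
apply/bigcupP; exists (pblock P y); last exact: part_in.
rewrite inE part_mem //=; apply: (@cdeg_gt0 _ y x).
- by rewrite esym.
- exact: part_in.
apply/negP => xD; have := part_uniq hP CP (part_mem y hP) xC xD.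
by move=> CD; move: yC; rewrite CD part_in.
Qed.

Lemma deg_sum_K P : part P -> Dinv P -> Kset P != set0 ->
  \sum_(C in Kset P) cdeg e C + 2 <= 2 * #|Kset P|.
Proof.
move=> hP hD K0.
set K := Kset P.
have KP : K \subset P by apply/subsetP => C; rewrite inE => /andP[].
have tK : trivIset K := trivIsetS KP (part_triv hP).
set U := cover K.
have HU : ie U = \sum_(C in K) (ie C + cdeg e C).
  rewrite ie_sum /U big_trivIset //; apply: eq_bigr => C CK.
  rewrite ie_sum cdeg_sum -big_split /=; apply: eq_bigr => x xC.
  rewrite -nbr_split; apply: eq_card => y; rewrite !inE.
  case xy: (e x y) => //=; exact: (nbr_in_K hP CK xC xy).
have U0 : U != set0.
  case/set0Pn: K0 => C CK; have /set0Pn [x xC] := part_ne0 hP (subsetP KP _ CK).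
  by apply/set0Pn; exists x; apply/bigcupP; exists C.
have HF := ie_forest U0.
have cU : #|U| = \sum_(C in K) #|C| by move: tK; rewrite /trivIset => /eqP.
have HD : \sum_(C in K) (2 * #|C|) <= \sum_(C in K) (ie C + 2).
  by apply: leq_sum => C CK; apply: hD; exact: (subsetP KP).
have E1 : \sum_(C in K) (2 * #|C|) = 2 * \sum_(C in K) #|C| by rewrite big_distrr.
have E2 : \sum_(C in K) (ie C + 2) = \sum_(C in K) ie C + 2 * #|K|
  by rewrite big_split /= sum_nat_const mulnC.
have E3 : \sum_(C in K) (ie C + cdeg e C) = \sum_(C in K) ie C + \sum_(C in K) cdeg e C
  by rewrite big_split.
move: HD HF; rewrite HU cU E1 E2 E3.
move: (\sum_(i in K) ie i) (\sum_(i in K) cdeg e i) (\sum_(i in K) #|i|) #|K|; lia.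
Qed.


Lemma ie_union (A D : {set T}) a d : [disjoint A & D] -> a \in A -> d \in D -> e a d ->
  ie A + ie D + 2 <= ie (A :|: D).
Proof.
move=> dAD aA dD ad.
set SA := [set p : T * T | [&& e p.1 p.2, p.1 \in A & p.2 \in A]].
set SD := [set p : T * T | [&& e p.1 p.2, p.1 \in D & p.2 \in D]].
set X := [set (a, d); (d, a)].
have aD : a \in D = false := disjointFr dAD aA.
have dA : d \in A = false := disjointFl dAD dD.
have I1 : SA :&: SD = set0.
  apply/setP => p; rewrite !inE; apply/negbTE; apply/negP => /andP[/and3P[_ p1 _] /and3P[_ p1' _]].
  by rewrite (disjointFr dAD p1) in p1'.
have I2 : (SA :|: SD) :&: X = set0.
  apply/setP => p; rewrite !inE; apply/negbTE; apply/negP => /andP[H /orP[/eqP E|/eqP E]];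
  by move: H; rewrite E /= aD dA !andbF.
have cX : #|X| = 2 by rewrite /X cards2; case: eqP => // -[ad' _]; move: aD; rewrite ad' dD.
have Hs : (SA :|: SD) :|: X \subset
   [set p : T * T | [&& e p.1 p.2, p.1 \in A :|: D & p.2 \in A :|: D]].
  apply/subsetP => q; rewrite !inE => /orP[/orP[/and3P[-> -> ->]|/and3P[-> -> ->]]|/orP[/eqP E|/eqP E]];
    rewrite ?orbT //; rewrite E /= aA dD ?orbT ?andbT //.
  by rewrite esym.
have := subset_leq_card Hs.
rewrite -/(ie (A :|: D)) cardsU I2 cards0 subn0 cardsU I1 cards0 subn0 cX.
by rewrite /ie.
Qed.

Definition Conn (P : {set {set T}}) :=
  forall C, C \in P -> forall x y, x \in C -> y \in C -> connect e x y.

Lemma cadj_sym C D : cadj e C D = cadj e D C.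
Proof.
rewrite /cadj eq_sym; congr (_ && _).
apply/existsP/existsP => [[x /andP[xC /existsP[y /andP[yD xy]]]]|[x /andP[xD /existsP[y /andP[yC xy]]]]];
  exists y; rewrite ?yD ?yC /=; apply/existsP; exists x; by rewrite ?xC ?xD esym.
Qed.

Section Group.
Variables (P g : {set {set T}}) (R : {set T}).
Hypotheses (hP : part P) (hD : Dinv P) (hC : Conn P) (gP : g \subset P) (Rg : R \in g)
  (hR : forall D, D \in g -> D != R -> cadj e R D).

Lemma RP : R \in P. Proof. exact: (subsetP gP). Qed.

Lemma disj_P C D : C \in P -> D \in P -> C != D -> [disjoint C & D].
Proof. by move=> CP DP CD; move/trivIsetP: (part_triv hP); apply. Qed.

Lemma group_dinv_n n (S : {set {set T}}) : #|S| = n -> S \subset g :\ R ->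
  2 * #|R :|: cover S| <= ie (R :|: cover S) + 2.
Proof.
elim: n S => [|n IH] S cS SgR.
  move: cS => /eqP; rewrite cards_eq0 => /eqP ->.
  by rewrite /cover big_set0 setU0; apply: hD; apply: RP.
have [D DS] : exists D, D \in S by apply/card_gt0P; rewrite cS.
have DgR := subsetP SgR _ DS; move: (DgR); rewrite !inE => /andP[DR Dg].
have DP := subsetP gP _ Dg.
set S' := S :\ D.
have cS' : #|S'| = n by move: cS; rewrite (cardsD1 D) DS; case.
have S'gR : S' \subset g :\ R by apply: subset_trans SgR; apply: subsetDl.
have IH' := IH _ cS' S'gR.
have ES : cover S = D :|: cover S'.
  rewrite /cover -{1}(setD1K DS) big_setU1 //=; by rewrite !inE eqxx.
have EU : R :|: cover S = (R :|: cover S') :|: D by rewrite ES setUCA [D :|: _]setUC.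
have dis : [disjoint R :|: cover S' & D].
  apply/pred0P => z /=; apply/negbTE/negP => /andP[zU zD].
  move: zU; rewrite inE => /orP[zR|/bigcupP[B BS' zB]].
    have H : [disjoint R & D] by apply: disj_P => //; [exact: RP | rewrite eq_sym].
    by rewrite (disjointFr H zR) in zD.
  move: (BS'); rewrite !inE => /andP[BD BS].
  have H : [disjoint B & D].
    by apply: disj_P => //; apply: (subsetP gP); move: (subsetP SgR _ BS); rewrite !inE => /andP[].
  by rewrite (disjointFr H zB) in zD.
have [a [aR [d [dD ad]]]] : exists a, a \in R /\ exists d, d \in D /\ e a d.
  move: (hR Dg DR) => /andP[_ /existsP[a /andP[aR /existsP[d /andP[dD ad]]]]].
  by exists a; split => //; exists d.
have aU : a \in R :|: cover S' by rewrite inE aR.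
have Hu := ie_union dis aU dD ad.
have HD := hD DP.
have cU : #|(R :|: cover S') :|: D| = #|R :|: cover S'| + #|D|.
  by rewrite cardsU (disjoint_setI0 dis) cards0 subn0.
rewrite EU cU.
exact: (arith1 Hu HD IH').
Qed.

Lemma group_dinv : 2 * #|cover g| <= ie (cover g) + 2.
Proof.
have E : cover g = R :|: cover (g :\ R).
  by rewrite /cover -{1}(setD1K Rg) big_setU1 //= !inE eqxx.
by rewrite E; apply: (@group_dinv_n #|g :\ R|).
Qed.

Lemma group_conn x y : x \in cover g -> y \in cover g -> connect e x y.
Proof.
have [r0 r0R] : exists r0, r0 \in R by apply/set0Pn; apply: (part_ne0 hP RP).
suff H : forall z, z \in cover g -> connect e z r0.
  move=> /H xr /H yr; apply: connect_trans xr _; by rewrite (sym_connect_sym esym).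
move=> z /bigcupP[B Bg zB].
have BP := subsetP gP _ Bg.
case: (B =P R) => [BR|/eqP BR]; first by apply: (hC BP) => //; rewrite BR.
move: (hR Bg BR) => /andP[_ /existsP[a /andP[aR /existsP[b /andP[bB ab]]]]].
apply: (@connect_trans _ _ b); first exact: (hC BP).
apply: (@connect_trans _ _ a); first by apply: connect1; rewrite esym.
exact: (hC RP).
Qed.

End Group.

Lemma card_bigcup_le (I : finType) (S : {pred I}) (F : I -> {set {set T}}) :
  #|\bigcup_(i in S) F i| <= \sum_(i in S) #|F i|.
Proof.
apply: (big_ind2 (fun (A : {set {set T}}) n => #|A| <= n)).
- by rewrite cards0.
- move=> A1 n1 A2 n2 H1 H2; rewrite cardsU; apply: leq_trans (leq_subr _ _) _.
  exact: leq_add.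
- by [].
Qed.

Lemma adj_le_deg P N : part P -> N \in P -> #|[set X in P | cadj e N X]| <= cdeg e N.
Proof.
move=> hP NP.
set Cr := [set p : T * T | [&& e p.1 p.2, p.1 \in N & p.2 \notin N]].
have H : [set X in P | cadj e N X] \subset (fun p : T * T => pblock P p.2) @: Cr.
  apply/subsetP => X; rewrite inE => /andP[XP /andP[NX /existsP[x /andP[xN /existsP[y /andP[yX xy]]]]]].
  apply/imsetP; exists (x, y); last by rewrite /= (part_def hP XP yX).
  rewrite inE /= xy xN /=; apply/negP => yN.
  by move: NX; rewrite (part_uniq hP NP XP yN yX) eqxx.
exact: (leq_trans (subset_leq_card H) (leq_imset_card _ _)).
Qed.

Lemma am_facts P g : allowed_merge e P g ->
  [/\ g \subset P, 2 <= #|g|, (forall C, C \in g -> 0 < cdeg e C) &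
      exists2 R, R \in g & forall D, D \in g -> D != R -> cadj e R D].
Proof.
case/andP => gP /orP[/existsP[C /andP[Cg /existsP[D /andP[Dg /and4P[/eqP gE CD lC lD]]]]]|
  /existsP[H /andP[Hg /and3P[hH gH0 /forallP hD]]]].
- have nCD : C != D by case/andP: CD.
  split => //.
  + by rewrite gE cards2 nCD.
  + move=> X; rewrite gE !inE => /orP[/eqP ->|/eqP ->]; [by case/andP: lC | by case/andP: lD].
  + exists C => // X; rewrite gE !inE => /orP[/eqP ->|/eqP -> _ //]; by rewrite eqxx.
- split => //.
  + by rewrite (cardsD1 H) Hg ltnS card_gt0.
  + move=> X Xg; case: (X =P H) => [->|/eqP XH]; first by apply: leq_ltn_trans hH.
    have := hD X; rewrite !inE XH Xg /= => /andP[/eqP -> _] //.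
  + exists H => // X Xg XH; have := hD X; rewrite !inE XH Xg /= => /andP[_ ->] //.
Qed.

Definition HIs (P : {set {set T}}) := [set C in P | 2 < cdeg e C].
Definition LFs (P : {set {set T}}) := [set C in P | cdeg e C == 1].

Lemma hi_bound P : part P -> Dinv P -> Kset P != set0 ->
  \sum_(C in HIs P) cdeg e C + 2 <= 2 * #|HIs P| + #|LFs P|.
Proof.
move=> hP hD K0; have HK := deg_sum_K hP hD K0.
set K := Kset P in HK *.
have E1 : K :&: HIs P = HIs P.
  apply/setIidPr/subsetP => C; rewrite !inE => /andP[-> H] /=; exact: leq_ltn_trans H.
set L2 := K :\: HIs P.
have E2 : L2 :&: LFs P = LFs P.
  apply/setIidPr/subsetP => C; rewrite !inE => /andP[-> /eqP ->] //.
have S1 := big_setID (HIs P) (fun C => cdeg e C) (idx := 0) (aop := addn) (A := K).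
have S2 := big_setID (LFs P) (fun C => cdeg e C) (idx := 0) (aop := addn) (A := L2).
rewrite E1 in S1; rewrite E2 in S2.
have F1 : \sum_(C in LFs P) cdeg e C = #|LFs P|.
  rewrite -sum1_card; apply: eq_bigr => C; rewrite inE => /andP[_ /eqP ->] //.
have F2 : 2 * #|L2 :\: LFs P| <= \sum_(C in L2 :\: LFs P) cdeg e C.
  rewrite mulnC -sum_nat_const; apply: leq_sum => C; rewrite !inE => /and4P[n1 _ CP p].
  by move: n1 p; rewrite CP /=; case: (cdeg e C) => [|[|n]].
have C1 := cardsID (HIs P) K; rewrite E1 in C1.
have C2 := cardsID (LFs P) L2; rewrite E2 in C2.
exact: (arith2 HK S1 S2 F1 F2 C1 C2).
Qed.

Lemma hi3 P : 3 * #|HIs P| <= \sum_(C in HIs P) cdeg e C.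
Proof. by rewrite mulnC -sum_nat_const; apply: leq_sum => C; rewrite inE => /andP[]. Qed.

Lemma adj_pos P C D : part P -> C \in P -> D \in P -> cadj e C D -> 0 < cdeg e D.
Proof.
move=> hP CP DP /andP[CD /existsP[x /andP[xC /existsP[y /andP[yD xy]]]]].
apply: (@cdeg_gt0 _ y x); first by rewrite esym.
  done.
apply/negP => xD; by move: CD; rewrite (part_uniq hP CP DP xC xD) eqxx.
Qed.

Lemma nbr_exists P C : part P -> C \in P -> 0 < cdeg e C -> exists2 N, N \in P & cadj e C N.
Proof.
move=> hP CP /card_gt0P[[x y]]; rewrite inE /= => /and3P[xy xC yC].
exists (pblock P y); first exact: part_mem.
apply/andP; split.
  by apply/negP => /eqP E; move: yC; rewrite E part_in.
apply/existsP; exists x; rewrite xC /=; apply/existsP; exists y; by rewrite part_in.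
Qed.

Definition NB (P : {set {set T}}) (S : {set {set T}}) := [set X in P | [exists N in S, cadj e N X]].

Lemma NB_le P (S : {set {set T}}) : part P -> S \subset P -> #|NB P S| <= \sum_(N in S) cdeg e N.
Proof.
move=> hP SP.
have H : NB P S \subset \bigcup_(N in S) [set X in P | cadj e N X].
  apply/subsetP => X; rewrite inE => /andP[XP /existsP[N /andP[NS NX]]].
  by apply/bigcupP; exists N => //; rewrite inE XP.
apply: leq_trans (subset_leq_card H) _; apply: leq_trans (card_bigcup_le _ _) _.
apply: leq_sum => N NS; apply: adj_le_deg => //; exact: (subsetP SP).
Qed.

Section Step.
Variables (P Q : {set {set T}}) (G : {set {set {set T}}}).
Hypotheses (hP : part P) (hD : Dinv P) (hC : Conn P).
Hypothesis hG1 : forall g, g \in G -> allowed_merge e P g.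
Hypothesis hG2 : forall g1 g2, g1 \in G -> g2 \in G -> g1 != g2 -> [disjoint g1 & g2].
Hypothesis hG3 : forall H D, H \in P -> D \in P -> 2 < cdeg e H -> cdeg e D = 1 -> cadj e H D ->
        exists2 g, g \in G & (H \in g) && (D \in g).
Hypothesis hG4 : forall C D, C \in P -> D \in P -> ~~ grouped G C -> ~~ grouped G D ->
        cadj e C D -> ~~ (low_deg e C && low_deg e D).
Hypothesis hQ : Q = [set cover g | g in G] :|: [set C in P | ~~ grouped G C].

Lemma gP g : g \in G -> g \subset P. Proof. by move/hG1/am_facts => []. Qed.

Lemma cover_pb g x : g \in G -> x \in cover g -> pblock P x \in g.
Proof.
move=> gG /bigcupP[B Bg xB]; by rewrite (part_def hP (subsetP (gP gG) _ Bg) xB).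
Qed.

Lemma same_block A B x : A \in Q -> B \in Q -> x \in A -> x \in B -> A = B.
Proof.
have key : forall g C, g \in G -> C \in P -> ~~ grouped G C -> x \in cover g -> x \in C -> False.
  move=> g C gG CP nC xg xC; move/negP: nC; apply; apply/existsP; exists g.
  by rewrite gG -(part_def hP CP xC) cover_pb.
rewrite hQ !inE => /orP[/imsetP[g1 g1G ->]|/andP[C1P nC1]] /orP[/imsetP[g2 g2G ->]|/andP[C2P nC2]] x1 x2.
- case: (g1 =P g2) => [-> //|/eqP g12].
  have := hG2 g1G g2G g12; move/disjointFr => /(_ _ (cover_pb g1G x1)).
  by rewrite (cover_pb g2G x2).
- by case: (key _ _ g1G C2P nC2 x1 x2).
- by case: (key _ _ g2G C1P nC1 x2 x1).
- exact: (part_uniq hP C1P C2P x1 x2).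
Qed.

Lemma partQ : part Q.
Proof.
apply/and3P; split.
- apply/eqP/setP => x; rewrite inE; apply/bigcupP.
  case: (boolP (grouped G (pblock P x))) => [/existsP[g /andP[gG xg]]|ng].
    exists (cover g); first by rewrite hQ inE; apply/orP; left; apply/imsetP; exists g.
    by apply/bigcupP; exists (pblock P x) => //; apply: part_in.
  exists (pblock P x); last exact: part_in.
  by rewrite hQ !inE part_mem // ng orbT.
- apply/trivIsetP => A B AQ BQ AB.
  apply/pred0P => x /=; apply/negbTE/negP => /andP[xA xB].
  by move/eqP: AB; apply; apply: (same_block AQ BQ xA xB).
- rewrite hQ !inE negb_or; apply/andP; split.
    apply/imsetP => -[g gG g0].
    case/am_facts: (hG1 gG) => gsP g2 _ _.
    have [B Bg] : exists B, B \in g by apply/card_gt0P; apply: leq_trans g2.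
    have /set0Pn [y yB] := part_ne0 hP (subsetP gsP _ Bg).
    have : y \in cover g by apply/bigcupP; exists B.
    by rewrite -g0 inE.
  apply/negP => /andP[H0 _]; by move: (part_ne0 hP H0); rewrite eqxx.
Qed.

Lemma DinvQ : Dinv Q.
Proof.
move=> A; rewrite hQ !inE => /orP[/imsetP[g gG ->]|/andP[AP _]]; last exact: hD.
case/am_facts: (hG1 gG) => gsP _ _ [R Rg HR].
exact: (group_dinv hP hD gsP Rg HR).
Qed.

Lemma ConnQ : Conn Q.
Proof.
move=> A; rewrite hQ !inE => /orP[/imsetP[g gG ->]|/andP[AP _]]; last exact: hC.
case/am_facts: (hG1 gG) => gsP _ _ [R Rg HR].
move=> x y; exact: (group_conn hP hC gsP Rg HR).
Qed.

Definition grp := [set C in P | grouped G C].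
Definition ugr := [set C in Kset P | ~~ grouped G C].

Lemma grp_cover : grp = cover G.
Proof.
apply/setP => C; rewrite !inE; apply/andP/bigcupP => [[_ /existsP[g /andP[gG Cg]]]|[g gG Cg]].
  by exists g.
split; first exact: (subsetP (gP gG)).
by apply/existsP; exists g; rewrite gG.
Qed.

Lemma G2_le : 2 * #|G| <= #|grp|.
Proof.
have tG : trivIset G by apply/trivIsetP => g1 g2 g1G g2G; apply: hG2.
rewrite grp_cover; move/eqP: tG => <-.
rewrite mulnC -sum_nat_const; apply: leq_sum => g gG.
by case/am_facts: (hG1 gG).
Qed.

Lemma grp_K : grp \subset Kset P.
Proof.
apply/subsetP => C; rewrite !inE => /andP[CP /existsP[g /andP[gG Cg]]].
by rewrite CP /=; case/am_facts: (hG1 gG) => _ _ H _; apply: H.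
Qed.

Lemma kP_eq : #|Kset P| = #|grp| + #|ugr|.
Proof.
rewrite -(cardsID grp (Kset P)); congr (_ + _).
  by rewrite (setIidPr grp_K).
apply: eq_card => C; rewrite !inE; case: (C \in P) => //=; by rewrite andbC.
Qed.

Lemma kQ_le : #|Kset Q| <= #|G| + #|ugr|.
Proof.
have H : Kset Q \subset [set cover g | g in G] :|: ugr.
  apply/subsetP => A; rewrite inE hQ !inE => /andP[/orP[->//|/andP[AP nA]] dA].
  by rewrite AP nA dA !orbT.
apply: leq_trans (subset_leq_card H) _; rewrite cardsU.
apply: leq_trans (leq_subr _ _) _; apply: leq_add => //; exact: leq_imset_card.
Qed.

Lemma new_le : #|[set C in Q | C \notin P]| <= #|G|.
Proof.
have H : [set C in Q | C \notin P] \subset [set cover g | g in G].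
  apply/subsetP => A; rewrite !inE hQ !inE => /andP[/orP[//|/andP[AP _]] nAP].
  by rewrite AP in nAP.
apply: leq_trans (subset_leq_card H) _; exact: leq_imset_card.
Qed.

Definition GL := [set C in grp | low_deg e C].

Lemma GLP : GL \subset P.
Proof. by apply/subsetP => C; rewrite !inE => /andP[/andP[]]. Qed.

Lemma HIP : HIs P \subset P.
Proof. by apply/subsetP => C; rewrite !inE => /andP[]. Qed.

Lemma low_or_hi N : 0 < cdeg e N -> low_deg e N || (2 < cdeg e N).
Proof. by rewrite /low_deg => ->; case: leqP. Qed.

Lemma ugr_sub : ugr \subset (NB P GL :|: HIs P) :|: NB P (HIs P).
Proof.
apply/subsetP => X; rewrite !inE => /andP[/andP[XP Xd] nX].
rewrite XP /=; case: (boolP (2 < cdeg e X)) => [hX|nh].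
  by apply/orP; left; apply/orP; right.
have lX : low_deg e X by move: (low_or_hi Xd); rewrite (negbTE nh) orbF.
have [N NP XN] := nbr_exists hP XP Xd.
have Nd := adj_pos hP XP NP XN.
case: (boolP (2 < cdeg e N)) => [hN|nhN].
  apply/orP; right; apply/existsP; exists N; by rewrite inE NP hN /= cadj_sym.
have lN : low_deg e N by move: (low_or_hi Nd); rewrite (negbTE nhN) orbF.
case: (boolP (grouped G N)) => [gN|nN].
  apply/orP; left; apply/orP; left; apply/existsP; exists N; by rewrite !inE NP gN lN /= cadj_sym.
by move: (hG4 XP NP nX nN XN); rewrite lX lN.
Qed.

Lemma LF_sub : LFs P \subset grp :|: NB P GL.
Proof.
apply/subsetP => X; rewrite !inE => /andP[XP /eqP X1].
rewrite XP /=; case: (boolP (grouped G X)) => [gX|nX]; first by apply/orP; left.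
apply/orP; right.
have Xd : 0 < cdeg e X by rewrite X1.
have [N NP XN] := nbr_exists hP XP Xd.
have Nd := adj_pos hP XP NP XN.
case: (boolP (2 < cdeg e N)) => [hN|nhN].
  have [g gG /andP[_ Xg]] := hG3 NP XP hN X1 (etrans (cadj_sym _ _) XN).
  by move/negP: nX; case; apply/existsP; exists g; rewrite gG.
have lN : low_deg e N by move: (low_or_hi Nd); rewrite (negbTE nhN) orbF.
have lX : low_deg e X by rewrite /low_deg X1.
case: (boolP (grouped G N)) => [gN|nN].
  apply/existsP; exists N; by rewrite !inE NP gN lN /= cadj_sym.
by move: (hG4 XP NP nX nN XN); rewrite lX lN.
Qed.

Lemma GL_sum : \sum_(N in GL) cdeg e N <= 2 * #|grp|.
Proof.
apply: (@leq_trans (2 * #|GL|)).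
  rewrite mulnC -sum_nat_const; apply: leq_sum => N; rewrite !inE => /andP[_ /andP[]] //.
rewrite leq_mul2l /=; apply: subset_leq_card; apply/subsetP => C; rewrite inE => /andP[] //.
Qed.

Lemma ugr_le : #|ugr| <= 14 * #|grp|.
Proof.
case: (boolP (Kset P == set0)) => [/eqP K0|K0].
  have : ugr \subset Kset P by apply/subsetP => C; rewrite inE => /andP[].
  by rewrite K0 subset0 => /eqP ->; rewrite cards0.
have H1 := hi_bound hP hD K0.
have H2 := hi3 P.
have H3 := GL_sum.
have H4 := NB_le hP GLP.
have H5 := NB_le hP HIP.
have H6 := subset_leq_card ugr_sub.
have H7 := subset_leq_card LF_sub.
have U1 := card_setU_le2 (NB P GL :|: HIs P) (NB P (HIs P)).
have U2 := card_setU_le2 (NB P GL) (HIs P).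
have U3 := card_setU_le2 grp (NB P GL).
exact: (arith3 H1 H2 H3 H4 H5 H6 H7 U1 U2 U3).
Qed.

End Step.

Lemma step_all P Q : part P -> Dinv P -> Conn P -> ufo_step e P Q ->
  [/\ part Q, Dinv Q, Conn Q, 30 * #|Kset Q| <= 29 * #|Kset P| &
      #|[set C in Q | C \notin P]| <= #|Kset P|].
Proof.
move=> hP hD hC [G [h1 h2 h3 h4 hQ]].
have A1 := kQ_le hQ.
have A2 : 2 * #|G| <= #|grp P G| by apply: G2_le.
have A3 : #|Kset P| = #|grp P G| + #|ugr P G| by apply: kP_eq.
have A4 : #|ugr P G| <= 14 * #|grp P G| by apply: ugr_le.
have A5 := new_le hQ.
split.
- exact: (partQ hP h1 h2 hQ).
- exact: (DinvQ hP hD h1 hQ).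
- exact: (ConnQ hP hC h1 hQ).
- exact: (arith4 A1 A2 A3 A4).
- exact: (arith5 A5 A2 A3).
Qed.

Lemma comp_of P : part P -> Conn P -> Kset P = set0 -> P = components e.
Proof.
move=> hP hC K0.
have E : forall x, pblock P x = [set y | connect e x y].
  move=> x; apply/setP => y; rewrite inE; apply/idP/idP.
    by apply: (hC _ (part_mem x hP)); apply: part_in.
  have cl : closed e (pblock P x).
    have H : forall u v, e u v -> u \in pblock P x -> v \in pblock P x.
      move=> u v uv uC; apply/negPn/negP => vC.
      have : pblock P x \in Kset P by rewrite inE part_mem //=; apply: (cdeg_gt0 uv uC vC).
      by rewrite K0 inE.
    move=> u v uv; apply/idP/idP; first exact: H.
    by apply: H; rewrite esym.
  by move=> /(closed_connect cl); rewrite part_in // => <-.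
rewrite /components; apply/setP => C; apply/idP/imsetP => [CP|[x _ ->]].
  have /set0Pn [x xC] := part_ne0 hP CP.
  by exists x => //; rewrite -E (part_def hP CP xC).
by rewrite -E part_mem.
Qed.

Lemma base_inv : [/\ part (singletons T), Dinv (singletons T) & Conn (singletons T)].
Proof.
have S1 : forall C, C \in singletons T -> exists x, C = [set x].
  by move=> C /imsetP[x _ ->]; exists x.
split.
- apply/and3P; split.
  + apply/eqP/setP => x; rewrite inE; apply/bigcupP; exists [set x]; last by rewrite inE.
    by apply/imsetP; exists x.
  + apply/trivIsetP => A B /S1[a ->] /S1[b ->] ab.
    apply/pred0P => z /=; rewrite !inE; apply/negbTE/negP => /andP[/eqP za /eqP zb].
    by move: ab; rewrite -za -zb eqxx.
  + apply/negP => /S1[x] /setP /(_ x); by rewrite !inE eqxx.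
- by rewrite /Dinv => C /S1[x ->]; rewrite cards1 leq_addl.
- rewrite /Conn => C /S1[z ->] x y; rewrite !inE => /eqP -> /eqP ->; exact: connect0.
Qed.

Lemma children_le P (S N : {set {set T}}) : part P -> S \subset P ->
  (forall D, D \in N -> D != set0) ->
  \sum_(C in S) #|[set D in N | D \subset C]| <= #|N|.
Proof.
move=> hP SP hN.
have E : forall C : {set T}, #|[set D in N | D \subset C]| = \sum_(D in N) (D \subset C : nat).
  move=> C; rewrite -(sum1dep_card (fun D : {set T} => (D \in N) && (D \subset C))) big_mkcondr /=.
  by apply: eq_bigr => D _; case: (D \subset C).
under eq_bigr => C _ do rewrite E.
rewrite exchange_big /= -sum1_card; apply: leq_sum => D DN.
have -> : \sum_(C in S) (D \subset C : nat) = #|[set C in S | D \subset C]|.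
  rewrite -(sum1dep_card (fun C : {set T} => (C \in S) && (D \subset C))) big_mkcondr /=.
  by apply: eq_bigr => C _; case: (D \subset C).
apply/card_le1_eqP => C1 C2; rewrite !inE => /andP[C1S D1] /andP[C2S D2].
have /set0Pn [x xD] := hN D DN.
symmetry; exact: (part_uniq hP (subsetP SP _ C1S) (subsetP SP _ C2S) (subsetP D1 _ xD) (subsetP D2 _ xD)).
Qed.

Lemma sum_deg_le P : part P -> Dinv P -> \sum_(C in P) cdeg e C <= 2 * #|Kset P|.
Proof.
move=> hP hD.
have -> : \sum_(C in P) cdeg e C = \sum_(C in Kset P) cdeg e C.
  rewrite [RHS]big_mkcond [LHS]big_mkcond /=; apply: eq_bigr => C _; rewrite inE.
  by case: (C \in P) => //=; case: (cdeg e C).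
case: (boolP (Kset P == set0)) => [/eqP ->|K0]; first by rewrite big_set0.
by apply: leq_trans (leq_addr 2 _) _; apply: deg_sum_K.
Qed.

End Forest.

Lemma bern a m : a ^ m * (a + m) <= a * a.+1 ^ m.
Proof.
elim: m => [|m IH]; first by rewrite !expn0 mul1n muln1 addn0.
rewrite !expnS.
move: (a ^ m) (a.+1 ^ m) IH => x y IH.
nia.
Qed.

Lemma two_powg a : 0 < a -> 2 * a ^ a <= a.+1 ^ a.
Proof.
move=> a0; have := bern a a; move: (a ^ a) (a.+1 ^ a) => x y H.
have : a * (2 * x) <= a * y.
  apply: leq_trans H; rewrite addnn -mul2n; nia.
by rewrite leq_pmul2l.
Qed.

Lemma two_pow : 2 * 29 ^ 29 <= 30 ^ 29.
Proof. exact: (@two_powg 29). Qed.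

Section Arith.
Variables (f : nat -> nat) (h : nat).
Hypothesis hdec : forall i, i < h -> 30 * f i.+1 <= 29 * f i.

Lemma geo_pow j : j <= h -> 30 ^ j * f j <= 29 ^ j * f 0.
Proof.
elim: j => [|j IH] hj; first by rewrite !expn0.
have := hdec hj; have := IH (ltnW hj).
rewrite !expnS; move: (30 ^ j) (29 ^ j) (f j) (f j.+1) (f 0) => a b x y z H1 H2.
nia.
Qed.

Lemma geo_sum m : m <= h -> \sum_(i < m) f i + 30 * f m <= 30 * f 0.
Proof.
elim: m => [|m IH] hm; first by rewrite big_ord0.
rewrite big_ord_recr /=.
have := hdec hm; have := IH (ltnW hm).
move: (\sum_(i < m) f i) (f m) (f m.+1) (f 0) => a b c d; lia.
Qed.

Lemma geo_sum_full : \sum_(i < h.+1) f i <= 30 * f 0.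
Proof.
rewrite big_ord_recr /=; have := geo_sum (leqnn h).
move: (\sum_(i < h) f i) (f h) (f 0) => a b c; lia.
Qed.

Lemma height_bound n : f 0 <= n -> (forall i, i < h -> 0 < f i) ->
  h <= 29 * (trunc_log 2 n).+1.
Proof.
move=> f0 fpos.
case: (posnP h) => [-> //|hpos].
set h' := h.-1.
have hh : h = h'.+1 by rewrite /h' prednK.
set q := h' %/ 29.
have qh : 29 * q <= h' by rewrite mulnC leq_divM.
have H1 : 30 ^ (29 * q) * f (29 * q) <= 29 ^ (29 * q) * f 0.
  by apply: geo_pow; rewrite hh; apply: (leq_trans qh (leqnSn _)).
have H2 : 0 < f (29 * q) by apply: fpos; rewrite hh ltnS.
have H3 : 30 ^ (29 * q) <= 29 ^ (29 * q) * n.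
  apply: (leq_trans _ (leq_trans H1 _)).
    by rewrite -{1}[30 ^ _]muln1 leq_mul2l H2 orbT.
  by rewrite leq_mul2l f0 orbT.
have H4 : 2 ^ q * 29 ^ (29 * q) <= 30 ^ (29 * q).
  rewrite !expnM -expnMn; move: (29 ^ 29) (30 ^ 29) two_pow => a b ab.
  elim: (q) => // q' IH; rewrite !expnS; exact: leq_mul.
have H5 : 2 ^ q <= n.
  have := leq_trans H4 H3; rewrite mulnC leq_pmul2l //; by rewrite expn_gt0.
have H6 := trunc_log_max (isT : 1 < 2) H5.
have H7 : h' < 29 * q.+1.
  by rewrite /q mulnC ltn_ceil.
rewrite hh; apply: leq_trans H7 _; by rewrite leq_mul2l ltnS H6 orbT.
Qed.

End Arith.

Section Main.
Variables (T : finType) (e : rel T) (L : nat -> {set {set T}}) (h : nat).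
Hypotheses (hF : forest e) (hU : is_ufo e L h).

Definition kk i := #|Kset e (L i)|.
Definition nodes i := #|[set C | is_node e L i C]|.

Lemma inv_all i : i <= h -> [/\ part (L i), Dinv e (L i) & Conn e (L i)].
Proof.
case: hU => L0 hS _ _.
elim: i => [|i IH] hi; first by rewrite L0; exact: base_inv.
case: (IH (ltnW hi)) => p d c.
by case: (step_all hF p d c (hS i hi)).
Qed.

Lemma kdec i : i < h -> 30 * kk i.+1 <= 29 * kk i.
Proof.
move=> hi; case: (inv_all (ltnW hi)) => p d c.
case: hU => _ hS _ _.
by case: (step_all hF p d c (hS i hi)).
Qed.

Lemma knew i : i < h -> #|[set C in L i.+1 | C \notin L i]| <= kk i.
Proof.
move=> hi; case: (inv_all (ltnW hi)) => p d c.
case: hU => _ hS _ _.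
by case: (step_all hF p d c (hS i hi)).
Qed.

Lemma kpos i : i < h -> 0 < kk i.
Proof.
move=> hi; case: (inv_all (ltnW hi)) => p d c.
case: hU => _ _ _ hN.
rewrite lt0n; apply/negP => /eqP /eqP; rewrite cards_eq0 => /eqP K0.
by move: (hN i hi); rewrite (comp_of hF p c K0) eqxx.
Qed.

Lemma L0_card : #|L 0| <= #|T|.
Proof. case: hU => -> _ _ _; exact: leq_imset_card. Qed.

Lemma k0 : kk 0 <= #|T|.
Proof.
apply: leq_trans L0_card; apply: subset_leq_card; apply/subsetP => C; rewrite inE => /andP[] //.
Qed.

Lemma nodes_le i : i <= h -> nodes i <= kk i + kk i.-1 + (i == 0) * #|T|.
Proof.
case: i => [|j] hj.
  rewrite /= mul1n; apply: leq_trans _ (leq_addl _ _); apply: leq_trans L0_card.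
  apply: subset_leq_card; apply/subsetP => C; rewrite inE /is_node => /andP[] //.
rewrite /= mul0n addn0.
have H : [set C | is_node e L j.+1 C] \subset Kset e (L j.+1) :|: [set C in L j.+1 | C \notin L j].
  apply/subsetP => C; rewrite !inE /is_node /= => /andP[CL /orP[nC|dC]].
    by rewrite CL nC orbT.
  by rewrite CL dC.
apply: leq_trans (subset_leq_card H) _; apply: leq_trans (card_setU_le2 _ _) _.
by apply: leq_add => //; apply: knew.
Qed.

Lemma sum_k : \sum_(i < h.+1) kk i <= 30 * #|T|.
Proof.
apply: leq_trans (geo_sum_full kdec) _; by rewrite leq_mul2l k0 orbT.
Qed.

Lemma sum_k1 : \sum_(i < h.+1) kk i.-1 <= 31 * #|T|.
Proof.
rewrite big_ord_recl /=.
have := geo_sum kdec (leqnn h); have := k0.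
under eq_bigr => i _ do rewrite add0n.
move: (\sum_(i < h) kk i) (kk h) (kk 0) #|T| => a b c d; lia.
Qed.

Lemma sum_n0 : \sum_(i < h.+1) ((i : nat) == 0) * #|T| = #|T|.
Proof.
rewrite big_ord_recl /= mul1n big1 ?addn0 // => i _; by rewrite /= mul0n.
Qed.

Lemma total_nodes : ufo_nodes e L h <= 62 * #|T|.
Proof.
rewrite /ufo_nodes.
apply: (@leq_trans (\sum_(i < h.+1) (kk i + kk i.-1 + ((i : nat) == 0) * #|T|))).
  apply: leq_sum => i _; rewrite -/(nodes i); apply: nodes_le; by rewrite -ltnS.
rewrite !big_split /= sum_n0.
have := sum_k; have := sum_k1.
move: (\sum_(i < h.+1) kk i) (\sum_(i < h.+1) kk i.-1) #|T| => a b c; lia.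
Qed.

Lemma space_le i : i <= h ->
  \sum_(C | is_node e L i C)
     (1 + #|[set D | (0 < i) && is_node e L i.-1 D && (D \subset C)]|
        + #|[set D in L i | cadj e C D]|) <= nodes i + nodes i.-1 + 2 * kk i.
Proof.
move=> hi; case: (inv_all hi) => p d c.
rewrite !big_split /= sum1dep_card -/(nodes i) -!addnA leq_add2l.
have nodeL : forall j C, is_node e L j C -> C \in L j by move=> j C /andP[].
apply: leq_add.
  case: i hi p d c => [|j] hj p d c.
    by rewrite big1 // => C _; apply/eqP; rewrite cards_eq0; apply/eqP/setP => D; rewrite !inE.
  case: (inv_all (ltnW hj)) => pj _ _.
  have E : \sum_(C | is_node e L j.+1 C)
      #|[set D | (0 < j.+1) && is_node e L j.+1.-1 D && (D \subset C)]| =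
      \sum_(C in [set C | is_node e L j.+1 C]) #|[set D in [set D | is_node e L j D] | D \subset C]|.
    apply: eq_big => [C|C _]; first by rewrite inE.
    by apply: eq_card => D; rewrite !inE.
  rewrite E /nodes /=; apply: children_le p _ _.
    by apply/subsetP => C; rewrite inE; apply: nodeL.
  by move=> D; rewrite inE => /nodeL; apply: part_ne0.
apply: leq_trans (sum_deg_le hF p d).
apply: (@leq_trans (\sum_(C | is_node e L i C) cdeg e C)).
  by apply: leq_sum => C /nodeL CL; apply: adj_le_deg.
rewrite big_mkcond [X in _ <= X]big_mkcond /=; apply: leq_sum => C _.
by case: ifP => // /nodeL ->.
Qed.

Lemma total_space : ufo_space e L h <= 246 * #|T|.
Proof.
rewrite /ufo_space.
apply: (@leq_trans (\sum_(i < h.+1) (nodes i + nodes i.-1 + 2 * kk i))).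
  by apply: leq_sum => i _; apply: space_le; rewrite -ltnS.
rewrite !big_split /=.
rewrite big1_eq addn0.
have N1 := total_nodes; rewrite /ufo_nodes -/nodes in N1.
have N2 : \sum_(i < h.+1) nodes i.-1 <= 2 * (62 * #|T|).
  rewrite big_ord_recl /=.
  under eq_bigr => i _ do rewrite add0n.
  have : nodes 0 <= \sum_(i < h.+1) nodes i by rewrite big_ord_recl leq_addr.
  have : \sum_(i < h) nodes i <= \sum_(i < h.+1) nodes i by rewrite big_ord_recr leq_addr.
  move: N1; move: (\sum_(i < h.+1) nodes i) (\sum_(i < h) nodes i) (nodes 0) #|T| => a b c n; lia.
have := sum_k.
move: N1 N2; move: (\sum_(i < h.+1) nodes i) (\sum_(i < h.+1) nodes i.-1) (\sum_(i < h.+1) kk i) #|T|.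
move=> a b c n; lia.
Qed.

End Main.

Theorem theorem4p1 :
  exists c : nat, forall (T : finType) (e : rel T)
    (L : nat -> {set {set T}}) (h : nat),
    forest e -> is_ufo e L h ->
    [/\ h <= c * (trunc_log 2 #|T|).+1,
        ufo_nodes e L h <= c * #|T| &
        ufo_space e L h <= c * #|T|].
Proof.
exists 246 => T e L h hF hU; split.
- apply: leq_trans (height_bound (kdec hF hU) (k0 hU) (kpos hF hU)) _.
  by rewrite leq_mul2r orbC.
- apply: leq_trans (total_nodes hF hU) _; by rewrite leq_mul2r orbC.
- exact: total_space.
Qed.
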